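(* Let $G$ be a finite connected undirected graph with vertices $v_1,\dots,v_n$ whose adjacency matrix $A(G)$ has Perron–Frobenius eigenvalue $\lambda_1>0$, with unit Perron–Frobenius eigenvector $X=(x_1,\dots,x_n)$ (all $x_m>0$), and let $\lambda=|\lambda_2|/\lambda_1<1$ where $\lambda_2$ is the eigenvalue of second largest modulus. Let $\Gamma$ be a group, $\gamma:V(G)\to\Gamma$, $t_m=\gamma(v_m)$, assume $\{t_a^{-1}t_b\}$ generates $\Gamma$, and let $\kappa>0$ be such that for every nontrivial irreducible finite-dimensional unitary representation $\rho$ of $\Gamma$ with finite image and every unit vector $u$ there is $s\in\{t_a^{-1}t_b\}$ with $\|\rho(s)u-u\|>\kappa$. Set $d=1-(\min_m x_m^2)\kappa^2/8$. Then for every such $\rho$, of dimension $k$, with $U=\mathrm{diag}(\rho(t_1),\dots,\rho(t_n))$ and $A=\lambda_1^{-1}A(G)\otimes I_k$, we have $\|(UA)^k\|_{op}\le g(\lambda,d)^{\lfloor k/2\rfloor}$ for all $k\ge 0$, where $g(\lambda,d)<1$ is a number depending only on $\lambda$ and $d$ (as in the preceding shrinkage theorem: for Hermitian $A$ with eigenvalue $1$, all other eigenvalues of modulus $\le\lambda$, and unitary $U$ with $\|P_{\max}Uv\|\le d\|v\|$ on the $1$-eigenspace, $\|(UA)^2\|_{op}\le g(\lambda,d)$).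
   Context: $\|\cdot\|_{op}$ is the operator norm; $P_{\max}$ is the orthogonal projection onto the eigenspace of $A$ for the eigenvalue $1$. *)

(* Defs.v *)
From HB Require Import structures.
From mathcomp Require Import all_boot all_order all_algebra.
From mathcomp Require Import reals complex mxtens.
Set Implicit Arguments. Unset Strict Implicit. Unset Printing Implicit Defensive.
Import Order.TTheory GRing.Theory Num.Theory.
Local Open Scope ring_scope.

Definition simple_graph n (e : rel 'I_n) : Prop := symmetric e /\ irreflexive e.
Definition connected_graph n (e : rel 'I_n) : Prop := forall i j, connect e i j.

Definition adjmx (F : pzRingType) n (e : rel 'I_n) : 'M[F]_n :=
  \matrix_(i, j) (e i j)%:R.

Definition cvnorm (R : rcfType) m (v : 'cV[R[i]]_m) : R :=
  Num.sqrt (\sum_i ((complex.Re (v i 0)) ^+ 2 + (complex.Im (v i 0)) ^+ 2)).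

Definition cadj (R : rcfType) m p (M : 'M[R[i]]_(m, p)) : 'M[R[i]]_(p, m) :=
  (map_mx (@conjc R) M)^T.
Definition unitary_mx (R : rcfType) k (M : 'M[R[i]]_k) : Prop :=
  M *m cadj M = 1%:M.

Definition unitary_rep (gT : groupType) (R : rcfType) k
    (rho : gT -> 'M[R[i]]_k) : Prop :=
  [/\ rho 1%g = 1%:M,
      (forall x y, rho (x * y)%g = rho x *m rho y)
    & forall x, unitary_mx (rho x)].

Definition finite_image (gT : groupType) (R : rcfType) k
    (rho : gT -> 'M[R[i]]_k) : Prop :=
  exists s : seq 'M[R[i]]_k, forall x, rho x \in s.

(** A subspace of C^k is encoded as the column space of W, i.e. the row space
    of W^T; invariance means rho x *m W has its columns in the column space of W. *)
Definition irreducible_rep (gT : groupType) (R : rcfType) k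
    (rho : gT -> 'M[R[i]]_k) : Prop :=
  (0 < k)%N /\
  forall W : 'M[R[i]]_k,
    (forall x, ((rho x *m W)^T <= W^T)%MS) -> W^T == 0 \/ row_full W^T.

Definition nontrivial_rep (gT : groupType) (R : rcfType) k
    (rho : gT -> 'M[R[i]]_k) : Prop :=
  exists x, rho x != 1%:M.

(** The set {t_a^{-1} t_b} generates Gamma (it is closed under inverses and
    contains 1, so the generated subgroup is the set of finite products). *)
Definition generates_diffs (gT : groupType) n (gamma : 'I_n -> gT) : Prop :=
  forall x : gT, exists l : seq ('I_n * 'I_n),
    x = foldr (fun p acc => ((gamma p.1)^-1 * gamma p.2 * acc)%g) 1%g l.

Definition kappa_property (gT : groupType) (R : rcfType) n
    (gamma : 'I_n -> gT) (kappa : R) : Prop :=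
  forall k (rho : gT -> 'M[R[i]]_k),
    unitary_rep rho -> finite_image rho -> irreducible_rep rho ->
    nontrivial_rep rho ->
    forall u : 'cV[R[i]]_k, cvnorm u = 1 ->
      exists a b, kappa < cvnorm (rho ((gamma a)^-1 * gamma b)%g *m u - u).

(** U = diag(rho(t_1),...,rho(t_n)) = sum_i E_ii (x) rho(t_i). *)
Definition Ublock (gT : groupType) (R : rcfType) n k (gamma : 'I_n -> gT)
    (rho : gT -> 'M[R[i]]_k) : 'M[R[i]]_(n * k) :=
  \sum_(i < n) (delta_mx i i *t rho (gamma i)).

Definition Ablock (R : rcfType) n k (e : rel 'I_n) (lam1 : R) : 'M[R[i]]_(n * k) :=
  ((lam1^-1)%:C%C *: map_mx (fun x : R => x%:C%C) (adjmx R e)) *t (1%:M : 'M[R[i]]_k).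

(* Main.v *)
Require Import Defs.
From HB Require Import structures.
From mathcomp Require Import all_boot all_order all_algebra.
From mathcomp Require Import reals complex mxtens.
From mathcomp Require Import ring lra.
Import Order.TTheory GRing.Theory Num.Theory.
Local Open Scope ring_scope.

Module Helpers.
Set Implicit Arguments. Unset Strict Implicit. Unset Printing Implicit Defensive.

Section Basics.
Variable R : realType.
Local Notation C := (R[i]).

Definition sqc (z : C) : R := complex.Re z ^+ 2 + complex.Im z ^+ 2.
Definition nsq m (v : 'cV[C]_m) : R := \sum_i sqc (v i 0).
Definition ipr m (u v : 'cV[C]_m) : R :=
  \sum_i (complex.Re (u i 0) * complex.Re (v i 0) + complex.Im (u i 0) * complex.Im (v i 0)).

Lemma ReD (x y : C) : complex.Re (x + y) = complex.Re x + complex.Re y.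
Proof. by case: x; case: y. Qed.
Lemma ImD (x y : C) : complex.Im (x + y) = complex.Im x + complex.Im y.
Proof. by case: x; case: y. Qed.
Lemma ReN (x : C) : complex.Re (- x) = - complex.Re x.
Proof. by case: x. Qed.
Lemma ImN (x : C) : complex.Im (- x) = - complex.Im x.
Proof. by case: x. Qed.
Lemma ReMc (x y : C) : complex.Re (x * y) = complex.Re x * complex.Re y - complex.Im x * complex.Im y.
Proof. by case: x; case: y. Qed.
Lemma ImMc (x y : C) : complex.Im (x * y) = complex.Re x * complex.Im y + complex.Im x * complex.Re y.
Proof. by case: x => a b; case: y => c d /=. Qed.
Lemma Re0 : complex.Re (0 : C) = 0. Proof. by []. Qed.
Lemma Im0 : complex.Im (0 : C) = 0. Proof. by []. Qed.
Lemma ReR (r : R) : complex.Re (r%:C%C) = r. Proof. by []. Qed.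
Lemma ImR (r : R) : complex.Im (r%:C%C) = 0. Proof. by []. Qed.
Lemma ReJ (x : C) : complex.Re (conjc x) = complex.Re x. Proof. by case: x. Qed.
Lemma ImJ (x : C) : complex.Im (conjc x) = - complex.Im x. Proof. by case: x. Qed.

Lemma ReSum (I : finType) (F : I -> C) : complex.Re (\sum_i F i) = \sum_i complex.Re (F i).
Proof. by apply: (big_morph _ ReD Re0). Qed.
Lemma ImSum (I : finType) (F : I -> C) : complex.Im (\sum_i F i) = \sum_i complex.Im (F i).
Proof. by apply: (big_morph _ ImD Im0). Qed.

Lemma sqc_ge0 z : 0 <= sqc z.
Proof. by rewrite /sqc addr_ge0 ?sqr_ge0. Qed.
Lemma nsq_ge0 m (v : 'cV[C]_m) : 0 <= nsq v.
Proof. by apply: sumr_ge0 => i _; apply: sqc_ge0. Qed.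

Lemma conjc_mul_sqc (z : C) : conjc z * z = (sqc z)%:C%C.
Proof. case: z => a b; rewrite /sqc /=; apply/eqP; rewrite eq_complex /=; apply/andP; split; apply/eqP; ring. Qed.

Lemma sqcM (x y : C) : sqc (x * y) = sqc x * sqc y.
Proof. rewrite /sqc ReMc ImMc; ring. Qed.

Lemma cvnormE m (v : 'cV[C]_m) : cvnorm v = Num.sqrt (nsq v).
Proof. by []. Qed.

Lemma nsqD m (u v : 'cV[C]_m) : nsq (u + v) = nsq u + nsq v + 2 * ipr u v.
Proof.
rewrite /nsq /ipr mulr_sumr -!big_split /=; apply: eq_bigr => i _.
rewrite !mxE /sqc ReD ImD; ring.
Qed.

Lemma nsqN m (u : 'cV[C]_m) : nsq (- u) = nsq u.
Proof. by rewrite /nsq; apply: eq_bigr => i _; rewrite !mxE /sqc ReN ImN !sqrrN. Qed.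

Lemma iprN m (u v : 'cV[C]_m) : ipr u (- v) = - ipr u v.
Proof. rewrite /ipr -sumrN; apply: eq_bigr => i _; rewrite !mxE ReN ImN; ring. Qed.

Lemma nsqZ m (c : C) (u : 'cV[C]_m) : nsq (c *: u) = sqc c * nsq u.
Proof. by rewrite /nsq mulr_sumr; apply: eq_bigr => i _; rewrite !mxE sqcM. Qed.

Lemma sqcR (r : R) : sqc (r%:C%C) = r ^+ 2.
Proof. by rewrite /sqc ReR ImR expr0n /= addr0. Qed.

Lemma iprZR m (r : R) (u v : 'cV[C]_m) : ipr u (r%:C%C *: v) = r * ipr u v.
Proof. rewrite /ipr mulr_sumr; apply: eq_bigr => i _; rewrite !mxE !ReMc !ImMc ReR ImR; ring. Qed.

Lemma iprC m (u v : 'cV[C]_m) : ipr u v = ipr v u.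
Proof. by rewrite /ipr; apply: eq_bigr => i _; rewrite mulrC [_ (u i 0) * _]mulrC. Qed.

Lemma iprR m (u : 'cV[C]_m) : ipr u u = nsq u.
Proof. by rewrite /ipr /nsq; apply: eq_bigr => i _; rewrite /sqc !expr2. Qed.

Lemma cauchy_schwarz m (u v : 'cV[C]_m) : ipr u v ^+ 2 <= nsq u * nsq v.
Proof.
have [v0|vpos] := eqVneq (nsq v) 0.
  have Hv : forall i, sqc (v i 0) = 0.
    move=> i; apply/eqP; move/eqP: v0; rewrite psumr_eq0 => [/allP H|j _]; last exact: sqc_ge0.
    by apply: H; rewrite mem_index_enum.
  have -> : ipr u v = 0.
    rewrite /ipr big1 // => i _; move: (Hv i); rewrite /sqc => /eqP.
    rewrite paddr_eq0 ?sqr_ge0 // !sqrf_eq0 => /andP[/eqP-> /eqP->]; ring.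
  by rewrite v0 mulr0 expr0n.
have vgt : 0 < nsq v by rewrite lt_def vpos nsq_ge0.
set t := - (ipr u v / nsq v).
have := nsq_ge0 (u + t%:C%C *: v).
rewrite nsqD nsqZ sqcR iprZR => H.
have H2 : 0 <= nsq v * (nsq u + t ^+ 2 * nsq v + 2 * (t * ipr u v)) by rewrite mulr_ge0 // ltW.
rewrite /t in H2.
have E : nsq v * (nsq u + (- (ipr u v / nsq v)) ^+ 2 * nsq v + 2 * (- (ipr u v / nsq v) * ipr u v))
   = nsq u * nsq v - ipr u v ^+ 2 by field; rewrite vpos.
by rewrite E subr_ge0 in H2.
Qed.

Lemma ipr_le m (u v : 'cV[C]_m) : ipr u v <= cvnorm u * cvnorm v.
Proof.
rewrite !cvnormE -sqrtrM ?nsq_ge0 //.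
apply: le_trans (ler_norm _) _; rewrite -sqrtr_sqr; apply: ler_wsqrtr.
exact: cauchy_schwarz.
Qed.

Lemma cvnorm_ge0 m (v : 'cV[C]_m) : 0 <= cvnorm v.
Proof. exact: sqrtr_ge0. Qed.

Lemma cvnorm_sq m (v : 'cV[C]_m) : cvnorm v ^+ 2 = nsq v.
Proof. by rewrite cvnormE sqr_sqrtr ?nsq_ge0. Qed.

Lemma cvnormD m (u v : 'cV[C]_m) : cvnorm (u + v) <= cvnorm u + cvnorm v.
Proof.
rewrite -(@ler_pXn2r _ 2) // ?nnegrE ?addr_ge0 ?cvnorm_ge0 //.
rewrite cvnorm_sq nsqD sqrrD !cvnorm_sq.
have := ipr_le u v; lra.
Qed.

Lemma nsqB_le m (u v : 'cV[C]_m) : nsq (u - v) <= 2 * nsq u + 2 * nsq v.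
Proof.
have := nsq_ge0 (u + v); rewrite nsqD => H.
rewrite nsqD nsqN iprN; lra.
Qed.

Lemma cvnormZ m (c : C) (u : 'cV[C]_m) : cvnorm (c *: u) = Num.sqrt (sqc c) * cvnorm u.
Proof. by rewrite !cvnormE nsqZ sqrtrM ?sqc_ge0. Qed.

End Basics.


Section Mx.
Variable R : realType.
Local Notation C := (R[i]).

Lemma cadjM m p q (A : 'M[C]_(m, p)) (B : 'M[C]_(p, q)) :
  cadj (A *m B) = cadj B *m cadj A.
Proof. by rewrite /cadj (map_mxM (@conjc R)) trmx_mul. Qed.

Lemma cadjK m p (A : 'M[C]_(m, p)) : cadj (cadj A) = A.
Proof. by apply/matrixP => i j; rewrite !mxE conjcK. Qed.

Lemma cadjE m p (A : 'M[C]_(m, p)) i j : cadj A i j = conjc (A j i).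
Proof. by rewrite !mxE. Qed.

Lemma nsq_cadj m (v : 'cV[C]_m) : (nsq v)%:C%C = (cadj v *m v) 0 0.
Proof.
rewrite mxE /nsq.
rewrite (big_morph (fun r : R => r%:C%C) (fun x y => rmorphD (@real_complex R) x y) (rmorph0 _)).
by apply: eq_bigr => i _; rewrite !mxE conjc_mul_sqc.
Qed.

Lemma complex_inj (x y : R) : x%:C%C = y%:C%C -> x = y.
Proof. by case. Qed.

Lemma unitary_nsq m (Q : 'M[C]_m) (v : 'cV[C]_m) :
  cadj Q *m Q = 1%:M -> nsq (Q *m v) = nsq v.
Proof.
move=> HQ; apply: complex_inj; rewrite !nsq_cadj cadjM.
by rewrite -mulmxA (mulmxA (cadj Q)) HQ mul1mx.
Qed.

Lemma unitary_mxC k (M : 'M[C]_k) : unitary_mx M -> cadj M *m M = 1%:M.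
Proof. by move=> H; apply: mulmx1C. Qed.

Lemma unitary_cvnorm m (Q : 'M[C]_m) (v : 'cV[C]_m) :
  cadj Q *m Q = 1%:M -> cvnorm (Q *m v) = cvnorm v.
Proof. by move=> H; rewrite !cvnormE unitary_nsq. Qed.

Lemma nsq_eq0 m (v : 'cV[C]_m) : nsq v = 0 -> v = 0.
Proof.
move=> /eqP; rewrite psumr_eq0 => [/allP H|j _]; last exact: sqc_ge0.
apply/matrixP => i j; rewrite ord1 mxE.
have /H : i \in index_enum 'I_m by rewrite mem_index_enum.
rewrite /sqc paddr_eq0 ?sqr_ge0 // !sqrf_eq0; case: (v i 0) => a b /= /andP[/eqP-> /eqP->] //.
Qed.

Lemma nsq0 m : nsq (0 : 'cV[C]_m) = 0.
Proof. by rewrite /nsq big1 // => i _; rewrite mxE /sqc /= expr0n /= addr0. Qed.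

End Mx.


Section Simple.
Variable R : realType.

Lemma adjmxE n (e : rel 'I_n) i j : adjmx R e i j = (e i j)%:R.
Proof. by rewrite mxE. Qed.

Lemma adjmx_sym n (e : rel 'I_n) : simple_graph e -> forall i j, adjmx R e i j = adjmx R e j i.
Proof. by case=> Hs _ i j; rewrite !adjmxE Hs. Qed.

Lemma simple_eig n (e : rel 'I_n) (lam1 : R) (X Z : 'cV[R]_n) :
  simple_graph e -> connected_graph e -> 0 < lam1 ->
  (forall m, 0 < X m 0) -> adjmx R e *m X = lam1 *: X ->
  adjmx R e *m Z = lam1 *: Z -> \sum_i X i 0 * Z i 0 = 0 -> Z = 0.
Proof.
move=> Hg Hc Hl Xpos HX HZ HXZ.
apply/matrixP => i j; rewrite ord1 [RHS]mxE.
case: (@arg_minP _ R _ i xpredT (fun j => Z j 0 / X j 0) isT) => i0 _ Hmin.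
set c := Z i0 0 / X i0 0.
pose W := Z - c *: X.
have W0 : forall l, W l 0 = Z l 0 - c * X l 0 by move=> l; rewrite !mxE.
have Wge0 : forall l, 0 <= W l 0.
  move=> l; rewrite W0 subr_ge0; have := Hmin l isT; rewrite /= -/c => H.
  have Xl := Xpos l; have Xn : X l 0 != 0 by apply: lt0r_neq0.
  rewrite -(@ler_pM2r _ (X l 0)^-1) ?invr_gt0 //.
  by rewrite -mulrA mulfV ?mulr1.
have Wi0 : W i0 0 = 0 by rewrite W0 /c mulfVK ?subrr // lt0r_neq0.
have HWm : adjmx R e *m W = lam1 *: W.
  by rewrite mulmxBr -scalemxAr HX HZ scalerBr !scalerA mulrC.
have HW : forall l, \sum_m (e l m)%:R * W m 0 = lam1 * W l 0.
  move=> l; move/matrixP: HWm => /(_ l 0); rewrite !mxE => <-.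
  by apply: eq_bigr => m _; rewrite ?mxE.
have Hcl : forall x y, e x y -> W x 0 = 0 -> W y 0 = 0.
  move=> x y Exy Wx; have := HW x; rewrite Wx mulr0 => /eqP.
  rewrite psumr_eq0 => [/allP H|m _]; last by rewrite mulr_ge0 ?ler0n ?Wge0.
  have /H : y \in index_enum 'I_n by rewrite mem_index_enum.
  by rewrite Exy /= mul1r => /eqP.
have Hclosed : closed e [pred x | W x 0 == 0].
  move=> x y Exy; rewrite !inE; apply/idP/idP => /eqP H; apply/eqP.
    exact: Hcl H.
  by apply: Hcl H; case: Hg => Hs _; rewrite Hs.
have Wz : forall l, W l 0 = 0.
  move=> l; have := closed_connect Hclosed (Hc i0 l); rewrite !inE Wi0 eqxx.
  by move/esym/eqP.
have Zc : forall l, Z l 0 = c * X l 0.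
  by move=> l; have := Wz l; rewrite W0 => /eqP; rewrite subr_eq0 => /eqP.
have Hs : 0 < \sum_l X l 0 ^+ 2.
  rewrite (bigD1 i) //= ltr_pwDl ?sumr_ge0 // => [|l _]; last exact: sqr_ge0.
  by rewrite exprn_gt0.
have c0 : c = 0.
  move: HXZ; under eq_bigr do rewrite Zc mulrCA -expr2.
  by rewrite -mulr_sumr => /eqP; rewrite mulf_eq0 (negbTE (lt0r_neq0 Hs)) orbF => /eqP.
by rewrite Zc c0 mul0r.
Qed.
End Simple.


Section Spec.
Variable R : realType.
Local Notation C := (R[i]).

Lemma tstar_cadj m p (M : 'M[C]_(m, p)) : map_mx Num.conj_op (trmx M) = cadj M.
Proof. by rewrite /cadj map_trmx. Qed.

Definition cmx m p (M : 'M[R]_(m, p)) : 'M[C]_(m, p) := map_mx (real_complex R) M.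

Lemma cmxE m p (M : 'M[R]_(m, p)) i j : cmx M i j = (M i j)%:C%C.
Proof. by rewrite mxE. Qed.

Lemma cadj_cmx m p (M : 'M[R]_(m, p)) : cadj (cmx M) = cmx M^T.
Proof. by apply/matrixP => i j; rewrite !mxE conjc_real. Qed.

Lemma herm_cmx n (G : 'M[R]_n) : G^T = G -> cmx G \is hermsymmx.
Proof.
move=> HG; apply/is_hermitianmxP; rewrite expr0 scale1r tstar_cadj cadj_cmx.
by rewrite HG.
Qed.

Lemma eigen_cmx n (G : 'M[R]_n) (a : R) : eigenvalue (cmx G) (a%:C%C) -> eigenvalue G a.
Proof.
rewrite !eigenvalue_root_char /cmx -map_char_poly.
by rewrite (fmorph_root (real_complex R)).
Qed.

End Spec.


Section Spec2.
Variable R : realType.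
Local Notation C := (R[i]).

Lemma sqc0 : sqc (0 : C) = 0.
Proof. by rewrite /sqc /= expr0n /= addr0. Qed.
Lemma sqcJ (z : C) : sqc (conjc z) = sqc z.
Proof. by rewrite /sqc ReJ ImJ sqrrN. Qed.

Lemma spec_ineq n (e : rel 'I_n) (lam1 lam2 : R) (X : 'cV[R]_n) :
  simple_graph e -> connected_graph e -> 0 < lam1 ->
  adjmx R e *m X = lam1 *: X -> (forall m, 0 < X m 0) ->
  \sum_m (X m 0) ^+ 2 = 1 ->
  (forall mu, eigenvalue (adjmx R e) mu -> mu != lam1 -> `|mu| <= `|lam2|) ->
  forall y : 'cV[C]_n,
  nsq (cmx (adjmx R e) *m y) <=
    lam1 ^+ 2 * sqc (\sum_i (X i 0)%:C%C * y i 0)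
    + lam2 ^+ 2 * (nsq y - sqc (\sum_i (X i 0)%:C%C * y i 0)).
Proof.
move=> Hg Hc Hlam HX Xpos HX1 Heig y.
set G := adjmx R e.
have GT : G^T = G by apply/matrixP => i j; rewrite mxE adjmx_sym.
set Gc := cmx G.
have Hherm : Gc \is hermsymmx by apply: herm_cmx.
have /orthomx_spectralP HGc := hermitian_normalmx Hherm.
set Q := spectralmx Gc in HGc; set D := spectral_diag Gc in HGc.
have HQu : Q \is unitarymx by apply: spectral_unitarymx.
have Dreal : forall i, D 0 i = (complex.Re (D 0 i))%:C%C.
  move=> i; rewrite RRe_real //.
  by move/mxOverP: (hermitian_spectral_diag_real Hherm) => /(_ 0 i).
have Hinv : invmx Q = cadj Q by rewrite invmx_unitary // tstar_cadj.
have QQs : Q *m cadj Q = 1%:M by have /unitarymxP := HQu; rewrite tstar_cadj.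
clearbody Q D.
have QsQ : cadj Q *m Q = 1%:M by apply: mulmx1C.
set Qs := cadj Q in QQs QsQ Hinv.
have HG2 : Gc = Qs *m diag_mx D *m Q by rewrite -Hinv.
pose d i := complex.Re (D 0 i).
have QG : Q *m Gc = diag_mx D *m Q by rewrite HG2 !mulmxA QQs mul1mx.
have Deig : forall i, eigenvalue G (d i).
  move=> i; apply: eigen_cmx; rewrite -Dreal; apply/eigenvalueP.
  exists (row i Q).
    by rewrite -row_mul QG row_mul row_diag_mx -scalemxAl -rowE.
  apply/negP => /eqP H0; have := congr1 (row i) QQs.
  rewrite row_mul H0 mul0mx row1 => /matrixP /(_ 0 i); rewrite !mxE !eqxx /=.
  by move/eqP; rewrite eq_sym oner_eq0.
set Xc := cmx X.
have GXc : Gc *m Xc = (lam1%:C%C) *: Xc.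
  by rewrite /Gc /Xc /cmx -map_mxM HX map_mxZ.
set xh := Q *m Xc.
have Dxh : diag_mx D *m xh = (lam1%:C%C) *: xh.
  by rewrite /xh mulmxA -QG -mulmxA GXc scalemxAr.
have Dxh' : forall l, D 0 l * xh l 0 = lam1%:C%C * xh l 0.
  by move=> l; move/matrixP: Dxh => /(_ l 0); rewrite mul_diag_mx !mxE.
have Hxh : xh = Q *m Xc by [].
clearbody xh.
have Key : forall w : 'cV[C]_n, diag_mx D *m w = (lam1%:C%C) *: w ->
    cadj xh *m w = 0 -> w = 0.
  move=> w Dw Hw.
  set Y := Qs *m w.
  have GY : Gc *m Y = (lam1%:C%C) *: Y.
    by rewrite HG2 /Y -!mulmxA (mulmxA Q) QQs mul1mx Dw scalemxAr.
  have XY : cadj Xc *m Y = 0 by rewrite /Y mulmxA -cadjM -Hxh.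
  have HYd : Qs *m w = Y by [].
  clearbody Y.
  have GYe : forall l, \sum_j (G l j)%:C%C * Y j 0 = (lam1%:C%C) * Y l 0.
    by move=> l; move/matrixP: GY => /(_ l 0); rewrite !mxE => <-; apply: eq_bigr => j _; rewrite ?mxE.
  have XYe : \sum_j (X j 0)%:C%C * Y j 0 = 0.
    move/matrixP: XY => /(_ 0 0); rewrite !mxE => H; rewrite -[RHS]H; apply: eq_bigr => j _.
    by rewrite ?mxE ?conjc_real.
  pose Yr := \col_j complex.Re (Y j 0).
  pose Yi := \col_j complex.Im (Y j 0).
  have Yr0 : Yr = 0.
    apply: (simple_eig Hg Hc Hlam Xpos HX).
      apply/matrixP => l j; rewrite ord1 [RHS]mxE [in RHS]mxE.
      have := congr1 (@complex.Re R) (GYe l); rewrite ReSum ReMc ReR ImR mul0r subr0 => <-.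
      by rewrite mxE; apply: eq_bigr => m _; rewrite !mxE ReMc ReR ImR mul0r subr0.
    have := congr1 (@complex.Re R) XYe; rewrite ReSum Re0 => H; rewrite -[RHS]H.
    by apply: eq_bigr => m _; rewrite !mxE ReMc ReR ImR mul0r subr0.
  have Yi0 : Yi = 0.
    apply: (simple_eig Hg Hc Hlam Xpos HX).
      apply/matrixP => l j; rewrite ord1 [RHS]mxE [in RHS]mxE.
      have := congr1 (@complex.Im R) (GYe l); rewrite ImSum ImMc ReR ImR mul0r addr0 => <-.
      by rewrite mxE; apply: eq_bigr => m _; rewrite !mxE ImMc ReR ImR mul0r addr0.
    have := congr1 (@complex.Im R) XYe; rewrite ImSum Im0 => H; rewrite -[RHS]H.
    by apply: eq_bigr => m _; rewrite !mxE ImMc ReR ImR mul0r addr0.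
  have Y0 : Y = 0.
    apply/matrixP => l j; rewrite ord1 mxE.
    move/matrixP: Yr0 => /(_ l 0); move/matrixP: Yi0 => /(_ l 0); rewrite !mxE.
    by case: (Y l 0) => a b /= -> ->.
  by rewrite -[w]mul1mx -QQs -mulmxA HYd Y0 mulmx0.
have nX : nsq xh = 1.
  rewrite Hxh unitary_nsq // /nsq -HX1; apply: eq_bigr => i _.
  by rewrite cmxE sqcR.
have xz : forall l, D 0 l != lam1%:C%C -> xh l 0 = 0.
  move=> l Hl; have /eqP := Dxh' l; rewrite -subr_eq0 -mulrBl mulf_eq0 subr_eq0 (negbTE Hl) /=.
  by move/eqP.
have : ~~ [forall i, xh i 0 == 0].
  apply/negP => /forallP H; move: nX; rewrite /nsq big1 => [|i _].
    by move/eqP; rewrite eq_sym oner_eq0.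
  by rewrite (eqP (H i)) sqc0.
rewrite negb_forall => /existsP [i1 Hi1].
have Di1 : D 0 i1 = lam1%:C%C.
  by case: (eqVneq (D 0 i1) lam1%:C%C) => // /xz H; rewrite H eqxx in Hi1.
have Dne : forall l, l != i1 -> D 0 l != lam1%:C%C.
  move=> l Hl; apply/negP => /eqP Dl.
  pose w : 'cV[C]_n := conjc (xh i1 0) *: delta_mx l 0 - conjc (xh l 0) *: delta_mx i1 0.
  have : w = 0.
    apply: Key.
      apply/matrixP => a b; rewrite ord1 mul_diag_mx !mxE.
      case: (eqVneq a l) => [->|Hal]; first by rewrite Dl.
      case: (eqVneq a i1) => [->|Hai]; first by rewrite Di1.
      by rewrite andFb mulr0n !(mulr0, subr0).
    rewrite mulmxBr -!scalemxAr -!colE.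
    apply/matrixP => a b; rewrite !ord1 !mxE.
    by rewrite mulrC subrr.
  move/matrixP => /(_ l 0); rewrite !mxE eqxx (negbTE Hl) /= mulr1 mulr0 subr0.
  by move/eqP; rewrite conjc_eq0 (negbTE Hi1).
have xz' : forall l, l != i1 -> xh l 0 = 0 by move=> l /Dne /xz.
have sx1 : sqc (xh i1 0) = 1.
  rewrite -nX /nsq (bigD1 i1) //= big1 ?addr0 // => l Hl.
  by rewrite xz' // sqc0.
set q := Q *m y.
have E1 : nsq (Gc *m y) = \sum_l d l ^+ 2 * sqc (q l 0).
  rewrite HG2 -!mulmxA unitary_nsq; last by rewrite /Qs cadjK.
  rewrite /nsq; apply: eq_bigr => l _.
  by rewrite mul_diag_mx mxE sqcM Dreal sqcR.
have E2 : nsq y = nsq q by rewrite /q unitary_nsq.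
have E3 : \sum_i (X i 0)%:C%C * y i 0 = conjc (xh i1 0) * q i1 0.
  transitivity ((cadj Xc *m y) 0 0).
    by rewrite mxE; apply: eq_bigr => j _; rewrite !mxE conjc_real.
  have -> : cadj Xc *m y = cadj xh *m q.
    by rewrite Hxh /q cadjM -/Qs -mulmxA (mulmxA Qs) QsQ mul1mx.
  rewrite mxE (bigD1 i1) //= big1 ?addr0; first by rewrite cadjE.
  by move=> l Hl; rewrite cadjE xz' // conjc0 mul0r.
rewrite E1 E2 E3 sqcM sqcJ sx1 mul1r /nsq (bigD1 i1) //= [X in _ <= _ + _ * (X - _)](bigD1 i1) //=.
have -> : d i1 = lam1 by rewrite /d Di1.
rewrite addrAC subrr add0r lerD2l mulr_sumr; apply: ler_sum => l Hl.
rewrite ler_wpM2r ?sqc_ge0 //.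
have Hd : d l != lam1.
  by apply: contra (Dne l Hl) => /eqP <-; rewrite -Dreal.
have H := Heig _ (Deig l) Hd.
rewrite -(real_normK (num_real (d l))) -(real_normK (num_real lam2)).
by rewrite lerXn2r ?nnegrE ?normr_ge0.
Qed.

End Spec2.


Lemma sum_tens (V : nmodType) n k (F : 'I_(n * k) -> V) :
  \sum_p F p = \sum_i \sum_a F (mxtens_index (i, a)).
Proof.
rewrite (reindex (@mxtens_index n k)) /=; last first.
  by exists (@mxtens_unindex n k) => x _; [apply: mxtens_indexK | apply: mxtens_unindexK].
by rewrite pair_big /=; apply: eq_bigr => -[i a].
Qed.

Section Tens.
Variable R : realType.
Local Notation C := (R[i]).
Variables (n k : nat).
Local Notation idx i a := (@mxtens_index n k (i, a)).

Definition slice (z : 'cV[C]_(n * k)) (a : 'I_k) : 'cV[C]_n := \col_i z (idx i a) 0.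
Definition blk (z : 'cV[C]_(n * k)) (i : 'I_n) : 'cV[C]_k := \col_a z (idx i a) 0.
Definition cvec (X : 'cV[R]_n) (z : 'cV[C]_(n * k)) : 'cV[C]_k :=
  \col_a \sum_i (X i 0)%:C%C * z (idx i a) 0.
Definition Pm (X : 'cV[R]_n) (z : 'cV[C]_(n * k)) : 'cV[C]_(n * k) :=
  \col_(p < n * k) ((X (@mxtens_unindex n k p).1 0)%:C%C * cvec X z (@mxtens_unindex n k p).2 0).

Lemma Pm_idx X z i a : Pm X z (idx i a) 0 = (X i 0)%:C%C * cvec X z a 0.
Proof. by rewrite /Pm mxE mxtens_indexK. Qed.

Lemma nsq_slice z : nsq z = \sum_a nsq (slice z a).
Proof.
rewrite /nsq sum_tens exchange_big /=; apply: eq_bigr => a _.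
by apply: eq_bigr => i _; rewrite mxE.
Qed.

Lemma nsq_blk z : nsq z = \sum_i nsq (blk z i).
Proof.
rewrite /nsq sum_tens /=; apply: eq_bigr => i _.
by apply: eq_bigr => a _; rewrite mxE.
Qed.

Lemma cvec_slice X z a : cvec X z a 0 = \sum_i (X i 0)%:C%C * slice z a i 0.
Proof. by rewrite mxE; apply: eq_bigr => i _; rewrite mxE. Qed.

Lemma cvec_blk X z : cvec X z = \sum_i (X i 0)%:C%C *: blk z i.
Proof.
apply/matrixP => a j; rewrite ord1 mxE summxE; apply: eq_bigr => i _.
by rewrite !mxE.
Qed.

Lemma Ablock_idx (e : rel 'I_n) (lam1 : R) (z : 'cV[C]_(n * k)) i a :
  (Ablock k e lam1 *m z) (idx i a) 0
  = (lam1^-1)%:C%C * \sum_j (adjmx R e i j)%:C%C * z (idx j a) 0.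
Proof.
rewrite mxE sum_tens mulr_sumr; apply: eq_bigr => j _.
rewrite (bigD1 a) //= big1 ?addr0 => [|b Hb]; last first.
  by rewrite /Ablock tensmxE !mxE eq_sym (negbTE Hb) mulr0 mul0r.
by rewrite /Ablock tensmxE !mxE eqxx mulr1 mulrA.
Qed.

Lemma slice_A (e : rel 'I_n) (lam1 : R) (z : 'cV[C]_(n * k)) a :
  slice (Ablock k e lam1 *m z) a = (lam1^-1)%:C%C *: (cmx (adjmx R e) *m slice z a).
Proof.
apply/matrixP => i j; rewrite ord1 mxE Ablock_idx [RHS]mxE [in RHS]mxE; congr (_ * _).
by apply: eq_bigr => l _; rewrite !mxE.
Qed.

Lemma Ublock_idx (gT : groupType) (gamma : 'I_n -> gT) (rho : gT -> 'M[C]_k) (z : 'cV[C]_(n * k)) i a :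
  (Ublock gamma rho *m z) (idx i a) 0 = (rho (gamma i) *m blk z i) a 0.
Proof.
rewrite mxE sum_tens (bigD1 i) //= [X in _ + X]big1 ?addr0 => [|j Hj]; last first.
  apply: big1 => b _; rewrite /Ublock summxE big1 ?mul0r // => l _.
  rewrite tensmxE !mxE.
  by case: (eqVneq i l) => [<-|Hil]; [rewrite (negbTE Hj) andbF | rewrite andFb]; rewrite !mul0r.
rewrite mxE; apply: eq_bigr => b _; rewrite /Ublock summxE (bigD1 i) //= big1 ?addr0 => [|l Hl].
  by rewrite tensmxE !mxE !eqxx mul1r.
by rewrite tensmxE !mxE eq_sym (negbTE Hl) mul0r.
Qed.

Lemma blk_U (gT : groupType) (gamma : 'I_n -> gT) (rho : gT -> 'M[C]_k) (z : 'cV[C]_(n * k)) i :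
  blk (Ublock gamma rho *m z) i = rho (gamma i) *m blk z i.
Proof. by apply/matrixP => a j; rewrite ord1 mxE Ublock_idx. Qed.

Lemma blk_Pm X z i : blk (Pm X z) i = (X i 0)%:C%C *: cvec X z.
Proof. by apply/matrixP => a j; rewrite ord1 !mxE mxtens_indexK. Qed.

Lemma blkD (z w : 'cV[C]_(n * k)) i : blk (z + w) i = blk z i + blk w i.
Proof. by apply/matrixP => a j; rewrite !mxE. Qed.
Lemma blkB (z w : 'cV[C]_(n * k)) i : blk (z - w) i = blk z i - blk w i.
Proof. by apply/matrixP => a j; rewrite !mxE. Qed.

Lemma cvecD X (z w : 'cV[C]_(n * k)) : cvec X (z + w) = cvec X z + cvec X w.
Proof. by rewrite !cvec_blk -big_split /=; apply: eq_bigr => i _; rewrite blkD scalerDr. Qed.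

End Tens.


Section Pyth.
Variable R : realType.
Local Notation C := (R[i]).

Lemma pyth_vec n (X : 'cV[R]_n) (y : 'cV[C]_n) : \sum_m (X m 0) ^+ 2 = 1 ->
  nsq y = sqc (\sum_i (X i 0)%:C%C * y i 0)
          + nsq (y - (\sum_i (X i 0)%:C%C * y i 0) *: cmx X).
Proof.
move=> HX1; set s := \sum_i _.
have Hr : complex.Re s = \sum_i X i 0 * complex.Re (y i 0).
  by rewrite ReSum; apply: eq_bigr => i _; rewrite ReMc ReR ImR mul0r subr0.
have Hi : complex.Im s = \sum_i X i 0 * complex.Im (y i 0).
  by rewrite ImSum; apply: eq_bigr => i _; rewrite ImMc ReR ImR mul0r addr0.
set rs := complex.Re s in Hr *; set ims := complex.Im s in Hi *.
have E : nsq (y - s *: cmx X) = \sum_i (sqc (y i 0) - 2 * rs * (X i 0 * complex.Re (y i 0))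
      - 2 * ims * (X i 0 * complex.Im (y i 0)) + (rs ^+ 2 + ims ^+ 2) * X i 0 ^+ 2).
  rewrite /nsq; apply: eq_bigr => i _; rewrite !mxE /sqc ReD ImD ReN ImN ReMc ImMc ReR ImR -/rs -/ims.
  ring.
rewrite E !big_split /= !sumrN ?big_split /= ?sumrN -!mulr_sumr -Hr -Hi HX1 /sqc -/rs -/ims /nsq.
rewrite /sqc big_split /=. ring.
Qed.

Variables (n k : nat).
Local Notation idx i a := (@mxtens_index n k (i, a)).

Lemma slice_B (z w : 'cV[C]_(n * k)) a : slice (z - w) a = slice z a - slice w a.
Proof. by apply/matrixP => i j; rewrite !mxE. Qed.

Lemma slice_Pm (X : 'cV[R]_n) (z : 'cV[C]_(n * k)) a : slice (Pm X z) a = cvec X z a 0 *: cmx X.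
Proof. by apply/matrixP => i j; rewrite ord1 !mxE mxtens_indexK /= mulrC. Qed.

Lemma nsq_cvec (X : 'cV[R]_n) (z : 'cV[C]_(n * k)) : nsq (cvec X z) = \sum_a sqc (cvec X z a 0).
Proof. by []. Qed.

Lemma pyth (X : 'cV[R]_n) (z : 'cV[C]_(n * k)) : \sum_m (X m 0) ^+ 2 = 1 ->
  nsq z = nsq (cvec X z) + nsq (z - Pm X z).
Proof.
move=> HX1; rewrite nsq_slice [nsq (z - _)]nsq_slice nsq_cvec -big_split /=.
apply: eq_bigr => a _; rewrite slice_B slice_Pm cvec_slice.
exact: pyth_vec.
Qed.

Lemma cvec_le (X : 'cV[R]_n) (z : 'cV[C]_(n * k)) : \sum_m (X m 0) ^+ 2 = 1 ->
  nsq (cvec X z) <= nsq z.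
Proof. by move=> HX1; rewrite (pyth z HX1) lerDl nsq_ge0. Qed.

Lemma cvec_A (e : rel 'I_n) (lam1 : R) (X : 'cV[R]_n) (z : 'cV[C]_(n * k)) :
  simple_graph e -> 0 < lam1 -> adjmx R e *m X = lam1 *: X ->
  cvec X (Ablock k e lam1 *m z) = cvec X z.
Proof.
move=> Hg Hl HX.
have HXG : forall j, \sum_i (X i 0)%:C%C * (adjmx R e i j)%:C%C = (lam1 * X j 0)%:C%C.
  move=> j; move/matrixP: HX => /(_ j 0); rewrite !mxE => <-.
  rewrite (big_morph (fun r : R => r%:C%C) (fun x y => rmorphD (@real_complex R) x y) (rmorph0 _)).
  by apply: eq_bigr => i _; rewrite adjmx_sym // rmorphM mulrC.
apply/matrixP => a b; rewrite ord1 !mxE.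
under eq_bigr do rewrite Ablock_idx mulr_sumr mulr_sumr.
rewrite exchange_big /=; apply: eq_bigr => j _.
transitivity (\sum_i (X i 0)%:C%C * (adjmx R e i j)%:C%C * ((lam1^-1)%:C%C * z (idx j a) 0)).
  by apply: eq_bigr => i _; ring.
rewrite -mulr_suml HXG rmorphM.
have Hc : lam1%:C%C * (lam1^-1)%:C%C = 1 :> C by rewrite -rmorphM mulfV ?lt0r_neq0.
transitivity ((lam1%:C%C * (lam1^-1)%:C%C) * ((X j 0)%:C%C * z (idx j a) 0)); first by ring.
by rewrite Hc mul1r.
Qed.


End Pyth.


Section Aineq.
Variable R : realType.
Local Notation C := (R[i]).

Lemma A_ineq n k (e : rel 'I_n) (lam1 lam2 : R) (X : 'cV[R]_n) :
  simple_graph e -> connected_graph e -> 0 < lam1 ->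
  adjmx R e *m X = lam1 *: X -> (forall m, 0 < X m 0) ->
  \sum_m (X m 0) ^+ 2 = 1 ->
  (forall mu, eigenvalue (adjmx R e) mu -> mu != lam1 -> `|mu| <= `|lam2|) ->
  forall z : 'cV[C]_(n * k),
  nsq (Ablock k e lam1 *m z) <=
    nsq (cvec X z) + (`|lam2| / lam1) ^+ 2 * (nsq z - nsq (cvec X z)).
Proof.
move=> Hg Hc Hl HX Xpos HX1 Heig z.
rewrite nsq_slice [nsq z]nsq_slice nsq_cvec -sumrB mulr_sumr -big_split /=.
apply: ler_sum => a _.
rewrite slice_A nsqZ sqcR cvec_slice.
have H := spec_ineq Hg Hc Hl HX Xpos HX1 Heig (slice z a).
set s := sqc _ in H *; set N := nsq (slice z a) in H *.
set M := nsq _ in H *.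
have Hl2 : 0 <= lam1^-1 ^+ 2 by apply: sqr_ge0.
apply: le_trans (ler_wpM2l Hl2 H) _.
rewrite expr_div_n real_normK ?num_real //.
have Hl0 : lam1 != 0 by apply: lt0r_neq0.
rewrite le_eqVlt; apply/orP; left; apply/eqP; field; by rewrite ?Hl0.
Qed.

End Aineq.


Section Convex.
Variable R : realType.
Local Notation C := (R[i]).

Lemma iprDl m (v1 v2 u : 'cV[C]_m) : ipr (v1 + v2) u = ipr v1 u + ipr v2 u.
Proof. rewrite /ipr -big_split /=; apply: eq_bigr => i _; rewrite !mxE ReD ImD; ring. Qed.
Lemma ipr0l m (u : 'cV[C]_m) : ipr 0 u = 0.
Proof. rewrite /ipr big1 // => i _; rewrite !mxE Re0 Im0; ring. Qed.
Lemma ipr_suml m (I : finType) (v : I -> 'cV[C]_m) u : ipr (\sum_i v i) u = \sum_i ipr (v i) u.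
Proof. exact: (big_morph (fun x => ipr x u) (fun x y => iprDl x y u) (ipr0l u)). Qed.
Lemma ipr_sumr m (I : finType) (v : I -> 'cV[C]_m) u : ipr u (\sum_i v i) = \sum_i ipr u (v i).
Proof. by rewrite iprC ipr_suml; apply: eq_bigr => i _; rewrite iprC. Qed.
Lemma iprZl m (r : R) (u v : 'cV[C]_m) : ipr (r%:C%C *: u) v = r * ipr u v.
Proof. by rewrite iprC iprZR iprC. Qed.

Lemma ipr_diff m (u v : 'cV[C]_m) : ipr u v = (nsq u + nsq v - nsq (u - v)) / 2.
Proof. rewrite nsqD nsqN iprN; field; done. Qed.

Lemma convex_ineq k n (w : 'I_n -> 'cV[C]_k) (p : 'I_n -> R) (N pmin K : R) a b :
  (forall i, nsq (w i) = N) -> (forall i, pmin <= p i) -> 0 <= pmin ->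
  \sum_i p i = 1 -> a != b -> K <= nsq (w a - w b) ->
  nsq (\sum_i (p i)%:C%C *: w i) <= N - pmin * K / 4.
Proof.
move=> Hw Hp Hpmin Hs Hab HK.
have p0 : forall i, 0 <= p i by move=> i; apply: le_trans Hpmin (Hp i).
pose D i j := nsq (w i - w j).
have D0 : forall i j, 0 <= D i j by move=> i j; apply: nsq_ge0.
have E : nsq (\sum_i (p i)%:C%C *: w i) = N - (\sum_i \sum_j p i * p j * D i j) / 2.
  rewrite -iprR ipr_suml.
  transitivity (\sum_i \sum_j (p i * p j * N - p i * p j * D i j / 2)).
    apply: eq_bigr => i _; rewrite ipr_sumr; apply: eq_bigr => j _.
    by rewrite iprZl iprZR ipr_diff !Hw /D; field.
  transitivity (\sum_i \sum_j (p i * p j * N) - (\sum_i \sum_j p i * p j * D i j) / 2).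
    rewrite mulr_suml -sumrB; apply: eq_bigr => i _; rewrite mulr_suml -sumrB.
    by apply: eq_bigr.
  congr (_ - _).
  transitivity (\sum_i p i * ((\sum_j p j) * N)).
    by apply: eq_bigr => i _; rewrite mulr_suml mulr_sumr; apply: eq_bigr => j _; ring.
  by rewrite -mulr_suml Hs !mul1r.
rewrite E.
suff : pmin * K / 2 <= \sum_i \sum_j p i * p j * D i j by lra.
have Hf : forall i, 0 <= \sum_j p i * p j * D i j.
  by move=> i; apply: sumr_ge0 => j _; rewrite !mulr_ge0.
have S1 : (\sum_j p a * p j * D a j) + (\sum_j p b * p j * D b j) <= \sum_i \sum_j p i * p j * D i j.
  rewrite [X in _ <= X](bigD1 a) //= lerD2l [X in _ <= X](bigD1 b) /=; last by rewrite eq_sym Hab.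
  by rewrite lerDl sumr_ge0.
apply: le_trans S1; rewrite -big_split /=.
have -> : pmin * K / 2 = \sum_j p j * (pmin * K / 2) by rewrite -mulr_suml Hs mul1r.
apply: ler_sum => j _.
have Hj : K <= 2 * D a j + 2 * D b j.
  apply: le_trans HK _; rewrite /D.
  have -> : w a - w b = (w a - w j) - (w b - w j) by rewrite opprB addrA subrK.
  exact: nsqB_le.
have Pa := Hp a; have Pb := Hp b; have Pj := p0 j.
have Da := D0 a j; have Db := D0 b j.
have h1 : pmin * p j * D a j <= p a * p j * D a j by rewrite ler_wpM2r // ler_wpM2r.
have h2 : pmin * p j * D b j <= p b * p j * D b j by rewrite ler_wpM2r // ler_wpM2r.
have h3 : pmin * p j * K <= pmin * p j * (2 * D a j + 2 * D b j) by rewrite ler_wpM2l // mulr_ge0.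
lra.
Qed.

End Convex.


Section Grp.
Variable R : realType.
Local Notation C := (R[i]).

Lemma rho_inv (gT : groupType) k (rho : gT -> 'M[C]_k) :
  unitary_rep rho -> forall x, rho (x^-1)%g = cadj (rho x).
Proof.
case=> H1 HM HU x.
have Hx : rho (x^-1)%g *m rho x = 1%:M by rewrite -HM mulVg H1.
by rewrite -[rho _]mulmx1 -(HU x) mulmxA Hx mul1mx.
Qed.

Lemma kappa_use n (gT : groupType) (gamma : 'I_n -> gT) (kappa : R) k
    (rho : gT -> 'M[C]_k) :
  unitary_rep rho -> finite_image rho -> irreducible_rep rho -> nontrivial_rep rho ->
  kappa_property gamma kappa -> 0 < kappa ->
  forall u : 'cV[C]_k, 0 < nsq u ->
  exists a b, kappa ^+ 2 * nsq u < nsq (rho (gamma a) *m u - rho (gamma b) *m u).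
Proof.
move=> Hu Hf Hi Hn HK Hk u Hpos.
set r := cvnorm u.
have rpos : 0 < r by rewrite /r cvnormE sqrtr_gt0.
pose u' := (r^-1)%:C%C *: u.
have Hu' : cvnorm u' = 1.
  rewrite /u' cvnormZ sqcR sqrtr_sqr ger0_norm ?invr_ge0 ?ltW // -/r mulVf //.
  exact: lt0r_neq0.
have [a [b Hab]] := HK k rho Hu Hf Hi Hn u' Hu'.
exists b, a.
have HU := Hu; case: HU => _ HM HU.
move: Hab; rewrite HM rho_inv // -mulmxA.
have -> : cadj (rho (gamma a)) *m (rho (gamma b) *m u') - u'
        = cadj (rho (gamma a)) *m (rho (gamma b) *m u' - rho (gamma a) *m u').
  by rewrite mulmxBr [X in _ = _ - X]mulmxA unitary_mxC // mul1mx.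
rewrite unitary_cvnorm; last by rewrite cadjK; apply: HU.
rewrite /u' -!scalemxAr -scalerBr cvnormZ sqcR sqrtr_sqr ger0_norm ?invr_ge0 ?ltW //.
set D := rho (gamma b) *m u - rho (gamma a) *m u => Hlt.
have H2 : kappa * r < cvnorm D.
  have ri : 0 < r^-1 by rewrite invr_gt0.
  by rewrite -(ltr_pM2l ri) mulrCA mulVf ?mulr1 // lt0r_neq0.
rewrite -!cvnorm_sq -/r -exprMn.
by rewrite ltrXn2r // ?nnegrE ?mulr_ge0 ?cvnorm_ge0 ?ltW.
Qed.

Lemma shrink n (gT : groupType) (gamma : 'I_n -> gT) (kappa : R) k
    (rho : gT -> 'M[C]_k) (X : 'cV[R]_n) (xmin : R) :
  unitary_rep rho -> finite_image rho -> irreducible_rep rho -> nontrivial_rep rho ->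
  kappa_property gamma kappa -> 0 < kappa ->
  0 <= xmin -> (forall m, xmin <= X m 0) -> \sum_m (X m 0) ^+ 2 = 1 ->
  forall u : 'cV[C]_k,
  nsq (\sum_i ((X i 0) ^+ 2)%:C%C *: (rho (gamma i) *m u))
    <= (1 - xmin ^+ 2 * kappa ^+ 2 / 4) * nsq u.
Proof.
move=> Hu Hf Hi Hn HK Hk Hx0 Hxm HX1 u.
have [N0|Npos] := eqVneq (nsq u) 0.
  have -> : u = 0 by apply: nsq_eq0.
  rewrite big1 ?nsq0 ?nsq0 ?mulr0 // => i _.
  by rewrite mulmx0 scaler0.
have Np : 0 < nsq u by rewrite lt_def Npos nsq_ge0.
have [a [b Hab]] := kappa_use Hu Hf Hi Hn HK Hk Np.
have Hne : a != b.
  apply/negP => /eqP Eab; move: Hab; rewrite Eab subrr nsq0.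
  by rewrite ltNge mulr_ge0 ?sqr_ge0 ?nsq_ge0.
have Hw : forall i, nsq (rho (gamma i) *m u) = nsq u.
  by move=> i; rewrite unitary_nsq //; apply: unitary_mxC; case: Hu.
have := @convex_ineq R k n (fun i => rho (gamma i) *m u) (fun i => X i 0 ^+ 2)
  (nsq u) (xmin ^+ 2) (kappa ^+ 2 * nsq u) a b Hw.
move=> H; apply: le_trans (H _ _ _ _ (ltW Hab)) _.
- by move=> i; rewrite lerXn2r ?nnegrE // (le_trans Hx0).
- exact: sqr_ge0.
- exact: HX1.
- exact: Hne.
- by rewrite le_eqVlt; apply/orP; left; apply/eqP; ring.
Qed.

End Grp.


Section Final.
Variable R : realType.
Local Notation C := (R[i]).

Lemma le_of_sq (x y : R) : 0 <= y -> x ^+ 2 <= y ^+ 2 -> x <= y.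
Proof. move=> y0 H; nra. Qed.

Lemma real_core (lam d c b gm s F : R) :
  0 <= lam -> lam < 1 -> 0 <= d -> d <= 1 -> 0 <= c -> 0 <= b -> 0 <= gm -> 0 <= s ->
  c ^+ 2 <= s ^+ 2 -> gm <= d * c + b -> gm ^+ 2 <= c ^+ 2 + b ^+ 2 ->
  b ^+ 2 <= lam ^+ 2 * (s ^+ 2 - c ^+ 2) ->
  F <= gm ^+ 2 + lam ^+ 2 * (c ^+ 2 + b ^+ 2 - gm ^+ 2) ->
  F <= (1 - (1 - lam ^+ 2) * ((1 - d) / 2) ^+ 2) * s ^+ 2.
Proof.
move=> l0 l1 d0 d1 c0 b0 g0 s0 cs Hg Hg2 Hb HF.
set sg := (1 - d) / 2.
have sg0 : 0 <= sg by rewrite /sg; lra.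
have sg1 : sg <= 1 / 2 by rewrite /sg; lra.
have ll : lam ^+ 2 <= 1 by nra.
have ll0 : 0 <= lam ^+ 2 by apply: sqr_ge0.
have HF' : F <= gm ^+ 2 * (1 - lam ^+ 2) + lam ^+ 2 * (c ^+ 2 + b ^+ 2) by lra.
have Hcb : c ^+ 2 + b ^+ 2 <= s ^+ 2 - (1 - lam ^+ 2) * (s ^+ 2 - c ^+ 2) by lra.
have [case1|case2] := lerP (sg ^+ 2 * s ^+ 2) (s ^+ 2 - c ^+ 2).
  have H1 : gm ^+ 2 * (1 - lam ^+ 2) <= (c ^+ 2 + b ^+ 2) * (1 - lam ^+ 2).
    by rewrite ler_wpM2r // subr_ge0.
  have H2 : (1 - lam ^+ 2) * (sg ^+ 2 * s ^+ 2) <= (1 - lam ^+ 2) * (s ^+ 2 - c ^+ 2).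
    by rewrite ler_wpM2l // subr_ge0.
  lra.
have Hb2 : b ^+ 2 <= (sg * s) ^+ 2.
  rewrite exprMn; apply: le_trans Hb _.
  have : lam ^+ 2 * (s ^+ 2 - c ^+ 2) <= 1 * (s ^+ 2 - c ^+ 2) by rewrite ler_wpM2r // subr_ge0.
  lra.
have Hb1 : b <= sg * s by apply: le_of_sq => //; apply: mulr_ge0.
have Hc1 : c <= s by apply: le_of_sq.
have Hgm : gm <= (d + sg) * s.
  apply: le_trans Hg _; have : d * c <= d * s by rewrite ler_wpM2l.
  lra.
have Hgm2 : gm ^+ 2 <= ((d + sg) * s) ^+ 2.
  by rewrite lerXn2r ?nnegrE // mulr_ge0 // addr_ge0.
have Hds : (d + sg) ^+ 2 <= 1 - sg ^+ 2 by rewrite /sg; nra.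
have H3 : gm ^+ 2 * (1 - lam ^+ 2) <= ((d + sg) * s) ^+ 2 * (1 - lam ^+ 2).
  by rewrite ler_wpM2r // subr_ge0.
have H4 : ((d + sg) * s) ^+ 2 * (1 - lam ^+ 2) <= (1 - sg ^+ 2) * s ^+ 2 * (1 - lam ^+ 2).
  by rewrite exprMn ler_wpM2r ?subr_ge0 // ler_wpM2r ?sqr_ge0.
have H5 : lam ^+ 2 * (c ^+ 2 + b ^+ 2) <= lam ^+ 2 * s ^+ 2.
  rewrite ler_wpM2l //; apply: le_trans Hcb _.
  have : 0 <= (1 - lam ^+ 2) * (s ^+ 2 - c ^+ 2) by rewrite mulr_ge0 // subr_ge0.
  lra.
have E : (1 - (1 - lam ^+ 2) * sg ^+ 2) * s ^+ 2
       = (1 - sg ^+ 2) * s ^+ 2 * (1 - lam ^+ 2) + lam ^+ 2 * s ^+ 2 by ring.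
rewrite E; lra.
Qed.

End Final.


End Helpers.
Import Helpers.

Theorem mainTheorem11 (R : realType) :
  exists g : R -> R -> R,
    (forall l d : R, 0 <= l < 1 -> 0 <= d < 1 -> g l d < 1) /\
    forall (n : nat) (e : rel 'I_n),
      simple_graph e -> connected_graph e ->
    forall (lam1 : R) (X : 'cV[R]_n),
      0 < lam1 ->
      eigenvalue (adjmx R e) lam1 ->
      (forall mu, eigenvalue (adjmx R e) mu -> `|mu| <= lam1) ->
      adjmx R e *m X = lam1 *: X ->
      (forall m, 0 < X m 0) ->
      \sum_m (X m 0) ^+ 2 = 1 ->
    forall lam2 : R,
      eigenvalue (adjmx R e) lam2 -> lam2 != lam1 ->
      (forall mu, eigenvalue (adjmx R e) mu -> mu != lam1 -> `|mu| <= `|lam2|) ->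
      `|lam2| / lam1 < 1 ->
    forall (gT : groupType) (gamma : 'I_n -> gT),
      generates_diffs gamma ->
    forall kappa : R, 0 < kappa -> kappa_property gamma kappa ->
    forall xmin : R,
      (exists m, xmin = X m 0) -> (forall m, xmin <= X m 0) ->
    forall (k : nat) (rho : gT -> 'M[R[i]]_k),
      unitary_rep rho -> finite_image rho -> irreducible_rep rho ->
      nontrivial_rep rho ->
    forall (j : nat) (v : 'cV[R[i]]_(n * k)),
      cvnorm (((Ublock gamma rho *m Ablock k e lam1) ^+ j) *m v)
        <= g (`|lam2| / lam1) (1 - xmin ^+ 2 * kappa ^+ 2 / 8) ^+ (j./2)
           * cvnorm v.
Proof.
exists (fun l d => 1 - (1 - l ^+ 2) * ((1 - d) / 2) ^+ 2 / 2).
split.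
  move=> l d /andP[l0 l1] /andP[d0 d1].
  have h1 : 0 < 1 - l ^+ 2 by nra.
  have h2 : 0 < ((1 - d) / 2) ^+ 2 by rewrite exprn_gt0 //; lra.
  have := mulr_gt0 h1 h2; lra.
move=> n e Hg Hc lam1 X Hl _ _ HX Xpos HX1 lam2 _ _ Heig Hlt gT gamma _ kappa Hk HK
  xmin [m0 Hm0] Hxm k rho Hu Hf Hi Hn j v.
cbv beta.
set lam := `|lam2| / lam1.
set t := xmin ^+ 2 * kappa ^+ 2 / 4.
have -> : 1 - xmin ^+ 2 * kappa ^+ 2 / 8 = 1 - t / 2 by rewrite /t; field.
set d := 1 - t / 2.
have lamlt : lam < 1 by [].
have lam0 : 0 <= lam by rewrite /lam divr_ge0 ?normr_ge0 ?ltW.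
have xmin0 : 0 <= xmin by rewrite Hm0 ltW.
have t0 : 0 <= t by rewrite /t; have := sqr_ge0 xmin; have := sqr_ge0 kappa; nra.
have kpos : (0 < k)%N by case: Hi.
have SH := shrink Hu Hf Hi Hn HK Hk xmin0 Hxm HX1.
have t1 : t <= 1.
  pose u0 : 'cV[R[i]]_k := delta_mx (Ordinal kpos) 0.
  have nu0 : nsq u0 = 1.
    rewrite /nsq (bigD1 (Ordinal kpos)) //= big1 ?addr0 => [|i Hi0].
      by rewrite mxE !eqxx /= /sqc /= expr0n /= addr0 expr1n.
    by rewrite mxE (negbTE Hi0) /= /sqc /= expr0n /= addr0.
  have := SH u0; rewrite nu0 mulr1 -/t => H.
  have := nsq_ge0 (\sum_i ((X i 0) ^+ 2)%:C%C *: (rho (gamma i) *m u0)); lra.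
have d0 : 0 <= d by rewrite /d; lra.
have d1 : d <= 1 by rewrite /d; lra.
set U := Ublock gamma rho; set A := Ablock k e lam1.
have AI : forall z : 'cV[R[i]]_(n * k), nsq (A *m z) <= nsq (cvec X z) + lam ^+ 2 * (nsq z - nsq (cvec X z)).
  by move=> z; apply: (A_ineq Hg Hc Hl HX Xpos HX1 Heig).
have AC : forall z : 'cV[R[i]]_(n * k), cvec X (A *m z) = cvec X z by move=> z; apply: cvec_A.
have UN : forall z : 'cV[R[i]]_(n * k), nsq (U *m z) = nsq z.
  move=> z; rewrite nsq_blk [nsq z]nsq_blk; apply: eq_bigr => i _.
  by rewrite blk_U unitary_nsq //; apply: unitary_mxC; case: Hu.
have CL : forall z : 'cV[R[i]]_(n * k), nsq (cvec X z) <= nsq z by move=> z; apply: cvec_le.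
have PY : forall z : 'cV[R[i]]_(n * k), nsq z = nsq (cvec X z) + nsq (z - Pm X z) by move=> z; apply: pyth.
have SHn : forall z : 'cV[R[i]]_(n * k), cvnorm (cvec X (U *m Pm X z)) <= d * cvnorm (cvec X z).
  move=> z.
  have -> : cvec X (U *m Pm X z) = \sum_i ((X i 0) ^+ 2)%:C%C *: (rho (gamma i) *m cvec X z).
    rewrite cvec_blk; apply: eq_bigr => i _.
    by rewrite blk_U blk_Pm -scalemxAr scalerA -rmorphM expr2.
  apply: le_of_sq; first by rewrite mulr_ge0 // cvnorm_ge0.
  rewrite cvnorm_sq exprMn cvnorm_sq; apply: le_trans (SH _) _.
  rewrite ler_wpM2r ?nsq_ge0 // -/t /d; have := sqr_ge0 t; nra.
have J1 : forall z : 'cV[R[i]]_(n * k), cvnorm (U *m (A *m z)) <= cvnorm z.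
  move=> z; apply: le_of_sq; first exact: cvnorm_ge0.
  rewrite !cvnorm_sq UN; apply: le_trans (AI z) _.
  have h1 := CL z; have h2 : lam ^+ 2 <= 1 by nra.
  have h3 : 0 <= (1 - lam ^+ 2) * (nsq z - nsq (cvec X z)).
    by apply: mulr_ge0; rewrite subr_ge0.
  lra.
have J2 : forall z : 'cV[R[i]]_(n * k), cvnorm (U *m (A *m (U *m (A *m z))))
    <= (1 - (1 - lam ^+ 2) * ((1 - d) / 2) ^+ 2 / 2) * cvnorm z.
  move=> z.
  set a := Pm X z.
  set b := A *m z - a.
  have PA : Pm X (A *m z) = a by rewrite /a /Pm AC.
  have Nb : nsq b = nsq (A *m z) - nsq (cvec X z).
    by rewrite (PY (A *m z)) AC PA -/b; ring.
  set y := U *m (A *m z).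
  have Ny : nsq y = nsq (cvec X z) + nsq b by rewrite /y UN Nb; ring.
  have Cy : cvec X y = cvec X (U *m a) + cvec X (U *m b).
    by rewrite /y -cvecD -mulmxDr /b addrC subrK.
  have G1 : cvnorm (cvec X y) <= d * cvnorm (cvec X z) + cvnorm b.
    rewrite Cy; apply: le_trans (cvnormD _ _) _; apply: lerD; first exact: SHn.
    apply: le_of_sq; first exact: cvnorm_ge0.
    by rewrite !cvnorm_sq -(UN b) CL.
  have H1 : cvnorm (cvec X z) ^+ 2 <= cvnorm z ^+ 2 by rewrite !cvnorm_sq CL.
  have H2 : cvnorm (cvec X y) ^+ 2 <= cvnorm (cvec X z) ^+ 2 + cvnorm b ^+ 2.
    by rewrite !cvnorm_sq -Ny CL.
  have H3 : cvnorm b ^+ 2 <= lam ^+ 2 * (cvnorm z ^+ 2 - cvnorm (cvec X z) ^+ 2).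
    by rewrite !cvnorm_sq Nb; have := AI z; lra.
  have H4 : nsq (U *m (A *m y)) <= cvnorm (cvec X y) ^+ 2
      + lam ^+ 2 * (cvnorm (cvec X z) ^+ 2 + cvnorm b ^+ 2 - cvnorm (cvec X y) ^+ 2).
    by rewrite !cvnorm_sq UN -Ny; exact: AI.
  have RC := real_core lam0 Hlt d0 d1 (cvnorm_ge0 (cvec X z)) (cvnorm_ge0 b)
      (cvnorm_ge0 (cvec X y)) (cvnorm_ge0 z) H1 G1 H2 H3 H4.
  set sg := (1 - d) / 2 in RC *.
  have sg0 : 0 <= sg by rewrite /sg; lra.
  have sg1 : sg <= 1 / 2 by rewrite /sg; lra.
  have ll : lam ^+ 2 <= 1 by nra.
  have ll0 : 0 <= lam ^+ 2 by apply: sqr_ge0.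
  have q0 : 0 <= (1 - lam ^+ 2) * sg ^+ 2 by rewrite mulr_ge0 ?sqr_ge0 // subr_ge0.
  have q1 : (1 - lam ^+ 2) * sg ^+ 2 <= 1.
    have : sg ^+ 2 <= 1 by nra.
    have : (1 - lam ^+ 2) * sg ^+ 2 <= 1 * sg ^+ 2 by rewrite ler_wpM2r ?sqr_ge0 //; lra.
    lra.
  apply: le_of_sq; first by rewrite mulr_ge0 ?cvnorm_ge0 //; lra.
  rewrite cvnorm_sq; apply: le_trans RC _.
  set q := (1 - lam ^+ 2) * sg ^+ 2 in q0 q1 *.
  set s2 := cvnorm z.
  have -> : ((1 - q / 2) * s2) ^+ 2 = (1 - q / 2) ^+ 2 * s2 ^+ 2 by ring.
  apply: ler_wpM2r; first exact: sqr_ge0.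
  have := sqr_ge0 q; nra.
set gg := 1 - (1 - lam ^+ 2) * ((1 - d) / 2) ^+ 2 / 2 in J2 *.
have gg0 : 0 <= gg.
  rewrite /gg.
  have sg0 : 0 <= (1 - d) / 2 by lra.
  have sg1 : (1 - d) / 2 <= 1 / 2 by lra.
  have ll : lam ^+ 2 <= 1 by nra.
  have ll0 : 0 <= lam ^+ 2 by apply: sqr_ge0.
  have : ((1 - d) / 2) ^+ 2 <= 1 by nra.
  have : (1 - lam ^+ 2) * ((1 - d) / 2) ^+ 2 <= 1 * ((1 - d) / 2) ^+ 2.
    by rewrite ler_wpM2r ?sqr_ge0 //; lra.
  lra.
elim/ltn_ind: j v => j IH v.
case: j IH => [|[|j]] IH.
- by rewrite expr0 mul1mx expr0 mul1r.
- by rewrite expr1 /= expr0 mul1r -mulmxA; apply: J1.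
rewrite !exprSr -!mulmxE -!mulmxA.
apply: le_trans (IH j _ _) _; first by apply: leq_trans (leqnSn _) _.
rewrite -mulrA ler_wpM2l ?exprn_ge0 //.
Qed.
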